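(* Let $X\in\mathbb{R}^{n\times d}$ with rows $x_1,\dots,x_n$ and let $w\in\mathbb{R}^n$ with $w_i\in\{v_1,\dots,v_t\}$ for all $i\in[n]$, where $v_1,\dots,v_t>0$. The range space induced by $\mathcal{F}_{\log}=\{\beta\mapsto w_i\cdot g(x_i\beta)\mid i\in[n]\}$ has VC dimension at most $t(d+1)$.
   Context: $g(z)=\ln(1+e^z)$. For a finite set $\mathcal{F}$ of functions $\mathbb{R}^d\to\mathbb{R}_{\ge0}$, for $\beta\in\mathbb{R}^d$ and $r\ge 0$ let $\mathrm{range}_{\mathcal{F}}(\beta,r)=\{f\in\mathcal{F}\mid f(\beta)\ge r\}$, and let $\mathrm{ranges}(\mathcal{F})=\{\mathrm{range}_{\mathcal{F}}(\beta,r)\mid\beta\in\mathbb{R}^d,r\ge 0\}$; the range space induced by $\mathcal{F}$ is $(\mathcal{F},\mathrm{ranges}(\mathcal{F}))$. Its VC dimension is the largest size of a subset $G\subseteq\mathcal{F}$ that is shattered, i.e. $|\{G\cap R\mid R\in\mathrm{ranges}(\mathcal{F})\}|=2^{|G|}$. *)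

(* Defs.v *)
From Stdlib Require Import Reals List.
From mathcomp Require Import all_boot.
Open Scope R_scope.

Definition g (z : R) : R := ln (1 + exp z).

Definition dotR {d : nat} (x y : 'I_d -> R) : R :=
  \big[Rplus/0]_(j < d) (x j * y j).

Definition range_of {D : Type} (F : (D -> R) -> Prop) (beta : D) (r : R)
  : (D -> R) -> Prop := fun f => F f /\ r <= f beta.

Definition shattered {D : Type} (F : (D -> R) -> Prop) (G : list (D -> R)) : Prop :=
  NoDup G /\ (forall f, In f G -> F f) /\
  forall S : (D -> R) -> Prop,
    exists (beta : D) (r : R), 0 <= r /\
      forall f, In f G -> (range_of F beta r f <-> S f).

Definition VCdim_le {D : Type} (F : (D -> R) -> Prop) (k : nat) : Prop :=
  forall G, shattered F G -> (length G <= k)%nat.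

Definition F_log {n d : nat} (X : 'I_n -> 'I_d -> R) (w : 'I_n -> R)
  : (('I_d -> R) -> R) -> Prop :=
  fun f => exists i : 'I_n, f = (fun beta => w i * g (dotR (X i) beta)).

(* Main.v *)
Require Import Defs.
From Stdlib Require Import Reals List Lia Lra Classical ClassicalEpsilon.
From mathcomp Require Import all_boot all_order all_algebra.
From mathcomp Require Import Rstruct.
Import GRing.Theory Num.Theory Order.TTheory.
Open Scope R_scope.

Lemma dep (d : nat) (y : 'I_d.+2 -> 'I_d -> R) :
  exists lam : 'I_d.+2 -> R, (exists j, lam j != 0%R) /\ (\sum_j lam j = 0)%R /\
    forall c, (\sum_j lam j * y j c = 0)%R.
Proof.
set A : 'M[R]_(d.+2, 1 + d) := row_mx (const_mx 1%R) (\matrix_(j, c) y j c).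
have hk : kermx A != 0%R.
  rewrite -mxrank_eq0 mxrank_ker. have := rank_leq_col A. rewrite subn_eq0 -ltnNge.
  by move=> h; apply: leq_ltn_trans h _; rewrite add1n.
have [j hj] : exists j, row j (kermx A) != 0%R.
  apply/existsP; apply: contraR hk => /existsPn h; apply/eqP/row_matrixP => i.
  by rewrite row0; apply/eqP; move: (h i); rewrite negbK.
set u := row j (kermx A).
have hu : (u *m A = 0)%R by rewrite /u -row_mul mulmx_ker row0.
move: hu; rewrite /A mul_mx_row => /eqP; rewrite row_mx_eq0 => /andP[/eqP h1 /eqP h2].
exists (fun i => u ord0 i); split; [|split].
- apply/existsP; apply: contraR hj => /existsPn h; apply/eqP/rowP => i.
  rewrite [RHS]mxE; apply/eqP; move: (h i); rewrite negbK. done.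
- have := congr1 (fun M : 'M[R]_1 => M ord0 ord0) h1; rewrite !mxE => h; rewrite -[X in _ = X]h.
  by apply: eq_bigr => i _; rewrite [const_mx _ _ _]mxE mulr1.
- move=> c; have := congr1 (fun M : 'M[R]_(1,d) => M ord0 c) h2; rewrite !mxE => h; rewrite -[X in _ = X]h.
  apply: eq_bigr => i _; congr (_ * _)%R; by rewrite mxE.
Qed.

Section S1.
Local Open Scope ring_scope.
Lemma sep (m : nat) (lam z : 'I_m -> R) : (exists j, lam j != 0) ->
  \sum_j lam j = 0 -> \sum_j lam j * z j = 0 ->
  ~ (forall a b, 0 < lam a -> lam b < 0 -> z b < z a).
Proof.
move=> [j0 hj0] hs hz hsep.
have [b hb] : exists b, lam b < 0.
  apply: NNPP => H; move/negP: hj0; apply; apply/eqP.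
  apply: (psumr_eq0P (P:=predT)) => // i _; rewrite leNgt; apply/negP => hi; apply: H; by exists i.
have [a ha] : exists a, 0 < lam a.
  apply: NNPP => H; move/negP: hj0; apply; apply/eqP.
  apply/eqP; rewrite -oppr_eq0; apply/eqP.
  apply: (psumr_eq0P (P:=predT) (F := fun i => - lam i)) => //.
    by move=> i _; rewrite oppr_ge0 leNgt; apply/negP => hi; apply: H; exists i.
  by rewrite sumrN hs oppr0.
case: (@arg_minP _ _ _ a (fun i => 0 < lam i) z ha) => s hs0 hmin.
have : \sum_j lam j * (z j - z s) = 0.
  under eq_bigr => j _ do rewrite mulrBr.
  by rewrite sumrB hz -mulr_suml hs mul0r subr0.
apply/eqP; rewrite psumr_neq0 //.
- apply/hasP; exists b; first by rewrite mem_index_enum.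
  rewrite /= nmulr_rgt0 // subr_lt0; exact: hsep.
- move=> i _; case: (ltgtP (lam i) 0) => h.
  + rewrite nmulr_rge0 // subr_le0; apply/ltW; exact: hsep.
  + by apply: mulr_ge0; [exact: ltW | rewrite subr_ge0; apply: hmin].
  + by rewrite h mul0r.
Qed.

End S1.

Lemma pig (t m : nat) (ks : seq 'I_t) : (t * m < size ks)%N -> exists k, (m < count_mem k ks)%N.
Proof.
move=> h; apply/existsP; apply: contraLR h => /existsPn H; rewrite -leqNgt.
have -> : size ks = \sum_(j <- ks) 1 by rewrite sum1_size.
rewrite (partition_big id predT) //=.
rewrite -[t in (_ <= t * _)%N]card_ord -sum_nat_const; apply: leq_sum => k _.
by rewrite sum1_count leqNgt; apply: H.
Qed.


Lemma dotRE d (x y : 'I_d -> R) : dotR x y = (\sum_(j < d) x j * y j)%R.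
Proof. by []. Qed.

Lemma len_filter (A : Type) (t : nat) (kf : A -> 'I_t) (k : 'I_t) (G : list A) :
  length (List.filter (fun f => kf f == k) G) = count_mem k (map kf G).
Proof. elim: G => //= a G IH; case: (kf a == k) => /=; by rewrite IH. Qed.

Lemma g_mono x y : x <= y -> g x <= g y.
Proof.
move=> h; case: (Rle_lt_or_eq_dec _ _ h) => [hl|->]; last by apply: Rle_refl.
apply: Rlt_le; apply: ln_increasing; first by have := exp_pos x; lra.
by have := exp_increasing _ _ hl; lra.
Qed.


Theorem lemma6 (n d t : nat) (X : 'I_n -> 'I_d -> R) (w : 'I_n -> R)
  (v : 'I_t -> R) (hv : forall k, 0 < v k)
  (hw : forall i, exists k, w i = v k) :
  VCdim_le (F_log X w) (t * (d + 1))%nat.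
Proof.
move=> G [hnd [hF hsh]].
case E: G => [|f0 G0]; first by [].
rewrite -E.
have [i0 _] := hF f0 (ltac:(rewrite E; left; reflexivity)).
have [k0 _] := hw i0.
have hch : forall f, exists p : 'I_n * 'I_t, In f G ->
    f = (fun beta => w p.1 * g (dotR (X p.1) beta)) /\ w p.1 = v p.2.
  move=> f; case: (classic (In f G)) => h; last by exists (i0, k0).
  have [i hi] := hF f h; have [k hk] := hw i; by exists (i, k).
pose sel f := proj1_sig (constructive_indefinite_description _ (hch f)).
have hsel : forall f, In f G ->
    f = (fun beta => w (sel f).1 * g (dotR (X (sel f).1) beta)) /\ w (sel f).1 = v (sel f).2.
  by move=> f; rewrite /sel; case: (constructive_indefinite_description _ _).
pose kf f := (sel f).2.
rewrite leqNgt; apply/negP => hlt.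
have [k hk] : exists k, (d.+1 < count_mem k (map kf G))%N.
  apply: pig; rewrite size_map; move: hlt; by rewrite addn1.
pose Gk := List.filter (fun f => kf f == k) G.
have hlen : (d.+2 <= length Gk)%N by rewrite /Gk len_filter.
have hndk : NoDup Gk by apply: NoDup_filter.
have hin : forall f, In f Gk -> In f G /\ kf f = k.
  by move=> f; rewrite /Gk filter_In => -[h1 /eqP h2].
pose fj (j : 'I_d.+2) := List.nth j Gk f0.
have hfj : forall j : 'I_d.+2, In (fj j) G /\ kf (fj j) = k.
  move=> j; apply: hin; apply: nth_In; apply/ssrnat.ltP.
  exact: leq_trans (ltn_ord j) hlen.
pose y j := X (sel (fj j)).1.
have [lam [hnz [hs1 hs2]]] := @dep d y.
pose S f := exists j, (0 < lam j)%R /\ f = fj j.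
have [beta [r [hr hiff]]] := hsh S.
have hval : forall j, fj j beta = v k * g (dotR (y j) beta).
  move=> j; have [hj hkj] := hfj j; have [e1 e2] := hsel _ hj.
  by rewrite {1}e1 e2 -hkj.
apply: (@sep _ lam (fun j => dotR (y j) beta) hnz hs1).
- rewrite /=.
  under eq_bigr => j _ do rewrite dotRE mulr_sumr.
  rewrite exchange_big /= big1 // => c _.
  transitivity ((\sum_j lam j * y j c) * beta c)%R; last by rewrite hs2 mul0r.
  rewrite mulr_suml; apply: eq_bigr => j _; by rewrite mulrA.
- move=> a b ha hb; apply/RltP.
  have hra : r <= fj a beta.
    have := proj2 (hiff (fj a) (proj1 (hfj a))); case; first by exists a.
    by move=> _ h.
  have hrb : ~ (r <= fj b beta).
    move=> h; have := proj1 (hiff (fj b) (proj1 (hfj b))) (conj (hF _ (proj1 (hfj b))) h).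
    move=> [j [hj ej]].
    have ebj : b = j.
      apply: val_inj; apply: (proj1 (NoDup_nth Gk f0) hndk); try apply/ssrnat.ltP;
        try exact: (leq_trans (ltn_ord _) hlen); exact: ej.
    by move: hb; rewrite ebj ltNge ltW.
  rewrite !hval in hra hrb.
  have hvk := hv k.
  apply: Rnot_le_lt => hab; apply: hrb; apply: Rle_trans hra _.
  apply: Rmult_le_compat_l; first by lra.
  exact: g_mono.
Qed.
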